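(* Let $\mathcal{A}$ and $\mathcal{U}$ be Banach algebras, $\theta$ a nonzero character on $\mathcal{A}$, and $\mathcal{X}$ a simple Banach $(\mathcal{A}\times_{\theta}\mathcal{U})$-bimodule. Let $D:\mathcal{A}\times_{\theta}\mathcal{U}\to\mathcal{X}$ be a derivation and $\delta_2(u)=D((0,u))$. Then either $\delta_2$ is continuous or $\mathcal{X}$ is a symmetric Banach $\mathcal{A}$-bimodule, i.e. $ax=xa$ for all $a\in\mathcal{A}$, $x\in\mathcal{X}$.
   Context: The Lau product $\mathcal{A}\times_{\theta}\mathcal{U}$ is $\mathcal{A}\times\mathcal{U}$ with norm $\|(a,u)\|=\|a\|+\|u\|$ and product $(a,u)(a',u')=(aa',\theta(a)u'+\theta(a')u+uu')$. $\mathcal{X}$ is an $\mathcal{A}$-bimodule via $ax=(a,0)x$, $xa=x(a,0)$ and a $\mathcal{U}$-bimodule via $ux=(0,u)x$, $xu=x(0,u)$. Simple means the only closed $(\mathcal{A}\times_{\theta}\mathcal{U})$-subbimodules of $\mathcal{X}$ are $\{0\}$ and $\mathcal{X}$. *)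

(* Defs.v *)
From HB Require Import structures.
From mathcomp Require Import all_boot all_order all_algebra.
From mathcomp Require Import all_classical all_reals topology normedtype.
From mathcomp Require Export complex.
Set Implicit Arguments. Unset Strict Implicit. Unset Printing Implicit Defensive.
Import Order.TTheory GRing.Theory Num.Theory.
Import numFieldNormedType.Exports.
Local Open Scope ring_scope.
Local Open Scope classical_set_scope.

Section Defs.
Variable K : numFieldType.

Definition banach_algebra (A : completeNormedModType K) (mul : A -> A -> A) :=
  [/\ (forall a b c, mul a (mul b c) = mul (mul a b) c),
      (forall a b c, mul a (b + c) = mul a b + mul a c)
      /\ (forall a b c, mul (a + b) c = mul a c + mul b c),
      (forall (k : K) a b, mul (k *: a) b = k *: mul a b),
      (forall (k : K) a b, mul a (k *: b) = k *: mul a b)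
    & (forall a b, `|mul a b| <= `|a| * `|b|)].

Definition nonzero_character (A : completeNormedModType K) (mul : A -> A -> A)
    (theta : A -> K) :=
  [/\ (forall a b, theta (a + b) = theta a + theta b),
      (forall (k : K) a, theta (k *: a) = k * theta a),
      (forall a b, theta (mul a b) = theta a * theta b)
    & exists a, theta a != 0].

Definition lau_mul (A U : completeNormedModType K) (mulA : A -> A -> A)
    (mulU : U -> U -> U) (theta : A -> K) (p q : A * U) : A * U :=
  (mulA p.1 q.1, theta p.1 *: q.2 + theta q.1 *: p.2 + mulU p.2 q.2).

Definition lau_norm (A U : completeNormedModType K) (p : A * U) : K :=
  `|p.1| + `|p.2|.

Definition padd (A U : completeNormedModType K) (p q : A * U) : A * U :=
  (p.1 + q.1, p.2 + q.2).
Definition pscale (A U : completeNormedModType K) (k : K) (p : A * U) : A * U :=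
  (k *: p.1, k *: p.2).

Definition banach_bimodule (B : Type) (addB : B -> B -> B) (scaleB : K -> B -> B)
    (mulB : B -> B -> B) (nrm : B -> K) (X : completeNormedModType K)
    (la : B -> X -> X) (ra : X -> B -> X) :=
  [/\ (forall p x y, la p (x + y) = la p x + la p y)
      /\ (forall (k : K) p x, la p (k *: x) = k *: la p x)
      /\ (forall p q x, la (addB p q) x = la p x + la q x)
      /\ (forall (k : K) p x, la (scaleB k p) x = k *: la p x),
      (forall p x y, ra (x + y) p = ra x p + ra y p)
      /\ (forall (k : K) p x, ra (k *: x) p = k *: ra x p)
      /\ (forall p q x, ra x (addB p q) = ra x p + ra x q)
      /\ (forall (k : K) p x, ra x (scaleB k p) = k *: ra x p),
      (forall p q x, la (mulB p q) x = la p (la q x))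
      /\ (forall p q x, ra x (mulB p q) = ra (ra x p) q)
      /\ (forall p q x, la p (ra x q) = ra (la p x) q)
    & exists C : K, forall p x,
        `|la p x| <= C * nrm p * `|x| /\ `|ra x p| <= C * nrm p * `|x|].

Definition closed_subbimodule (B : Type) (X : completeNormedModType K)
    (la : B -> X -> X) (ra : X -> B -> X) (S : set X) :=
  [/\ closed S, S 0,
      (forall x y, S x -> S y -> S (x + y)),
      (forall (k : K) x, S x -> S (k *: x))
    & (forall p x, S x -> S (la p x) /\ S (ra x p))].

Definition simple_bimodule (B : Type) (X : completeNormedModType K)
    (la : B -> X -> X) (ra : X -> B -> X) :=
  forall S : set X, closed_subbimodule la ra S -> S = [set 0] \/ S = setT.

Definition derivation (B : Type) (addB : B -> B -> B) (scaleB : K -> B -> B)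
    (mulB : B -> B -> B) (X : completeNormedModType K)
    (la : B -> X -> X) (ra : X -> B -> X) (D : B -> X) :=
  [/\ (forall p q, D (addB p q) = D p + D q),
      (forall (k : K) p, D (scaleB k p) = k *: D p)
    & (forall p q, D (mulB p q) = la p (D q) + ra (D p) q)].

End Defs.

(* Main.v *)
Require Import Defs.
From HB Require Import structures.
From mathcomp Require Import all_boot all_order all_algebra.
From mathcomp Require Import all_classical all_reals topology normedtype sequences.
From mathcomp Require Import complex.
Import Order.TTheory GRing.Theory Num.Theory.
Import numFieldNormedType.Exports.
Local Open Scope ring_scope.
Local Open Scope classical_set_scope.
Local Open Scope complex_scope.
Local Notation Re := complex.Re.
Set Implicit Arguments. Unset Strict Implicit. Unset Printing Implicit Defensive.

Section NR.
Variable R : realType.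

Lemma realC_ge0 (z : R[i]) : 0 <= z -> z = (Re z)%:C.
Proof. by move=> z0; rewrite RRe_real // ger0_real. Qed.

Lemma Re_ge0 (z : R[i]) : 0 <= z -> 0 <= Re z.
Proof. by move=> /[dup] z0 /realC_ge0 E; move: z0; rewrite E ler0c. Qed.

Lemma leC_Re (z w : R[i]) : z <= w -> Re z <= Re w.
Proof. by rewrite lecE => /andP[]. Qed.

Lemma ltC_Re (z w : R[i]) : z < w -> Re z < Re w.
Proof. by rewrite ltcE => /andP[]. Qed.

Lemma ReM_real (z : R[i]) (r : R) : Re (z * r%:C) = Re z * r.
Proof. by case: z => a b /=; rewrite mulr0 subr0. Qed.

Lemma ReD (z w : R[i]) : Re (z + w) = Re z + Re w.
Proof. by case: z; case: w. Qed.

Variable V : normedModType R[i].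

Definition nr (x : V) : R := Re `|x|.

Lemma normE (x : V) : `|x| = (nr x)%:C.
Proof. exact: realC_ge0. Qed.

Lemma nr_ge0 x : 0 <= nr x.
Proof. exact: Re_ge0. Qed.

Lemma nrD x y : nr (x + y) <= nr x + nr y.
Proof. by rewrite -ReD; apply: leC_Re; apply: ler_normD. Qed.

Lemma nrN x : nr (- x) = nr x.
Proof. by rewrite /nr normrN. Qed.

Lemma nrB x y : nr (x - y) = nr (y - x).
Proof. by rewrite /nr distrC. Qed.

Lemma nr0 : nr 0 = 0.
Proof. by rewrite /nr normr0. Qed.

Lemma nr_eq0 x : nr x = 0 -> x = 0.
Proof. by move=> h; apply/normr0_eq0; rewrite normE h. Qed.

Lemma nrZ (k : R) x : nr (k%:C *: x) = `|k| * nr x.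
Proof.
rewrite /nr normrZ normE.
have -> : `|k%:C| = `|k|%:C.
  by rewrite normc_def /= expr0n /= addr0 sqrtr_sqr.
by rewrite /= !mulr0 subr0.
Qed.

Lemma nrZ_pos (k : R) x : 0 <= k -> nr (k%:C *: x) = k * nr x.
Proof. by move=> k0; rewrite nrZ ger0_norm. Qed.

End NR.
Section Complete.
Variable R : realType.
Variable V : completeNormedModType R[i].

Lemma complete_seq (s : nat -> V) :
  (forall e : R, 0 < e -> exists N, forall n, (N <= n)%N -> nr (s n - s N) < e) ->
  exists l, forall e : R, 0 < e -> exists N, forall n, (N <= n)%N -> nr (l - s n) < e.
Proof.
move=> Hc.
have : cvg (s @ \oo).
  apply: cauchy_cvg; apply: cauchy_exP => eps eps0.
  have e0 : 0 < Re eps by apply: ltC_Re eps0.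
  have [N HN] := Hc _ e0.
  exists (s N); exists N => // n /= Nn.
  rewrite -ball_normE /= normE (realC_ge0 (ltW eps0)) ltcR nrB.
  exact: HN.
move=> cs; exists (lim (s @ \oo)) => e e0.
have e0' : 0 < e%:C by rewrite ltcR.
have := (proj1 (cvgrPdist_lt _ _) cs) _ e0'.
move=> [N _ HN]; exists N => n Nn.
by have := HN n Nn; rewrite normE ltcR.
Qed.
End Complete.
From Stdlib Require Import Classical.
From mathcomp Require Import ring lra.

Section CG.
Variable R : realType.
Variables U X : completeNormedModType R[i].
Variable f : U -> X.
Hypothesis fD : forall u v, f (u + v) = f u + f v.
Hypothesis fZ : forall (k : R) u, f (k%:C *: u) = k%:C *: f u.
Hypothesis fcl : forall u x, (forall e : R, 0 < e -> exists v, nr (u - v) < e /\ nr (x - f v) < e) -> x = f u.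

Lemma f0 : f 0 = 0.
Proof. by apply/eqP; rewrite -(addrI (f 0) (_ : f 0 + f 0 = f 0 + 0)) // addr0 -fD addr0. Qed.

Lemma fN u : f (- u) = - f u.
Proof. by apply/eqP; rewrite -addr_eq0 -fD addNr f0. Qed.

Lemma fB u v : f (u - v) = f u - f v.
Proof. by rewrite fD fN. Qed.

Lemma archi_inv (e : R) : 0 < e -> exists n : nat, n.+1%:R^-1 < e.
Proof.
move=> e0; exists (Num.truncn e^-1).
by rewrite -ltf_pV2 ?(posrE,divr_gt0)// ?invr_gt0// invrK truncnS_gt.
Qed.


Lemma baire_step :
  exists n : nat, exists u0 : U, exists r : R, 0 < r /\
    forall v, nr (v - u0) < r -> forall e : R, 0 < e ->
      exists w, nr (v - w) < e /\ nr (f w) <= n%:R.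
Proof.
apply: NNPP => H.
have Hs : forall (n : nat) (b : U) (r : R), 0 < r -> exists v, exists e : R,
    nr (v - b) < r /\ 0 < e /\ forall w, nr (v - w) < e -> n%:R < nr (f w).
  move=> n b r r0; apply: NNPP => H1; apply: H; exists n, b, r; split => // v vb e e0.
  apply: NNPP => H2; apply: H1; exists v, e; split => //; split => // w vw.
  rewrite ltNge; apply/negP => fw; apply: H2; by exists w.
have step : forall kp : nat * (U * R), exists q : U * R, 0 < kp.2.2 ->
    [/\ 0 < q.2, nr (q.1 - kp.2.1) + q.2 <= kp.2.2, q.2 <= kp.1.+2%:R^-1
      & forall w, nr (w - q.1) <= q.2 -> kp.1%:R < nr (f w)].
  move=> [k [b r]] /=.
  case: (boolP (0 < r)) => r0; last by exists (b, r).
  have [v [e [vb [e0 He]]]] := Hs k b (r / 2) (divr_gt0 r0 (ltr0Sn R 1)).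
  pose r' := Num.min (e / 2) (Num.min (r / 2) (k.+2%:R^-1)).
  have r'0 : 0 < r'.
    have h1 : 0 < e / 2 by lra.
    have h2 : 0 < r / 2 by lra.
    have h3 : 0 < k.+2%:R^-1 :> R by rewrite invr_gt0 ltr0Sn.
    by rewrite /r' !lt_min h1 h2 h3.
  exists (v, r') => _ /=; split => //.
  - have : r' <= r / 2 by rewrite /r' !ge_min lexx orbT.
    move=> hr'; lra.
  - by rewrite /r' !ge_min lexx !orbT.
  - move=> w wv; apply: He; rewrite nrB; apply: (le_lt_trans wv).
    have : r' <= e / 2 by rewrite /r' !ge_min lexx.
    lra.
have [g Hg] := choice step.
pose fix bs n := if n is k.+1 then g (k, bs k) else ((0 : U), (1 : R)).
have bpos : forall n, 0 < (bs n).2.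
  by elim => [|k IH] /=; [exact: ltr01 | have [] := Hg (k, bs k) IH].
have HS : forall k, [/\ 0 < (bs k.+1).2, nr ((bs k.+1).1 - (bs k).1) + (bs k.+1).2 <= (bs k).2,
      (bs k.+1).2 <= k.+2%:R^-1
      & forall w, nr (w - (bs k.+1).1) <= (bs k.+1).2 -> k%:R < nr (f w)].
  by move=> k; exact: (Hg (k, bs k) (bpos k)).
have Hrad : forall n, (bs n).2 <= n.+1%:R^-1.
  by case => [|k] /=; [rewrite invr1 | have [] := HS k].
clearbody bs.
have Hnest : forall j m, (j <= m)%N -> nr ((bs m).1 - (bs j).1) + (bs m).2 <= (bs j).2.
  move=> j; elim => [|m IH].
    by rewrite leqn0 => /eqP ->; rewrite subrr nr0 add0r.
  rewrite leq_eqVlt => /orP[/eqP ->|]; first by rewrite subrr nr0 add0r.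
  rewrite ltnS => /IH jm; have [_ h2 _ _] := HS m.
  apply: le_trans jm.
  have e1 : (bs m.+1).1 - (bs j).1 = ((bs m.+1).1 - (bs m).1) + ((bs m).1 - (bs j).1).
    by rewrite addrA subrK.
  rewrite e1; apply: (le_trans (lerD (nrD _ _) (lexx _))).
  move: h2; set a := nr _; set b := nr _; set c := (bs m.+1).2; set d := (bs m).2.
  move=> h2; lra.
have [l Hl] : exists l, forall e : R, 0 < e -> exists N, forall n, (N <= n)%N -> nr (l - (bs n).1) < e.
  apply: complete_seq => e e0.
  have [N HN] := archi_inv e0.
  exists N => n Nn /=; have := Hnest N n Nn; have := Hrad N; have := bpos n.
  move=> h1 h2 h3; move: (N.+1%:R^-1) HN h2 => q HN h2; lra.
have Hlim : forall j, nr (l - (bs j).1) <= (bs j).2.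
  move=> j; rewrite leNgt; apply/negP => hj.
  have d0 : 0 < nr (l - (bs j).1) - (bs j).2 by lra.
  have [N HN] := Hl _ d0.
  have := HN (maxn N j) (leq_maxl _ _).
  have := Hnest j (maxn N j) (leq_maxr _ _).
  have := bpos (maxn N j).
  have e1 : l - (bs j).1 = (l - (bs (maxn N j)).1) + ((bs (maxn N j)).1 - (bs j).1).
    by rewrite addrA subrK.
  have := nrD (l - (bs (maxn N j)).1) ((bs (maxn N j)).1 - (bs j).1).
  rewrite -e1; lra.
have Hk : forall k, k%:R < nr (f l).
  by move=> k; have [_ _ _ h] := HS k; apply: h; exact: Hlim.
have := Hk (Num.truncn (nr (f l))).+1.
by rewrite ltNge (ltW (truncnS_gt _)).
Qed.
Lemma zh (V : zmodType) (a b c d : V) : (a + b - c) - (a - d) = b - (c - d).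
Proof. rewrite opprB (addrC d) addrA -(addrA a) (addrC a) -(addrA (b - c)) addrA addrK opprB addrC addrA. by rewrite [RHS]addrCA addrA. Qed.
Lemma CM (a b : R) : (a * b)%:C = a%:C * b%:C.
Proof. by rewrite rmorphM. Qed.
Lemma C1 : (1 : R)%:C = 1.
Proof. by []. Qed.

Lemma approx : exists M : R, 0 <= M /\ forall v (e : R), 0 < e ->
  exists w, nr (v - w) < e /\ nr (f w) <= M * nr v.
Proof.
have [n [u0 [r [r0 H]]]] := baire_step.
exists (4 * n%:R / r); split; first by apply: divr_ge0; [apply: mulr_ge0 | apply: ltW].
move=> v e e0.
have [v0|vn0] := eqVneq (nr v) 0.
  exists 0; rewrite (nr_eq0 v0) subrr nr0 f0 nr0 mulr0; split => //.
have t0 : 0 < nr v by rewrite lt0r vn0 nr_ge0.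
set t := nr v in t0 vn0 *.
pose s := r / (2 * t).
have s0 : 0 < s by apply: divr_gt0 => //; apply: mulr_gt0.
have se0 : 0 < s * e / 2 by apply: divr_gt0 => //; apply: mulr_gt0.
have [w1 [h1 h1']] : exists w1, nr (u0 + s%:C *: v - w1) < s * e / 2 /\ nr (f w1) <= n%:R.
  apply: H => //; rewrite addrAC subrr add0r nrZ_pos; last exact: ltW.
  have -> : s * t = r / 2 by rewrite /s; field; rewrite gt_eqF.
  lra.
have [w2 [h2 h2']] : exists w2, nr (u0 - w2) < s * e / 2 /\ nr (f w2) <= n%:R.
  by apply: H => //; rewrite subrr nr0.
exists ((s^-1)%:C *: (w1 - w2)); split.
  have -> : v - (s^-1)%:C *: (w1 - w2) =
      (s^-1)%:C *: ((u0 + s%:C *: v - w1) - (u0 - w2)).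
    rewrite zh [RHS]scalerBr scalerA -CM mulVf ?gt_eqF // C1 scale1r //.
  rewrite nrZ_pos; last by rewrite invr_ge0 ltW.
  have := nrD (u0 + s%:C *: v - w1) (- (u0 - w2)); rewrite nrN => hD.
  rewrite ltr_pdivrMl //; lra.
rewrite fZ nrZ_pos; last by rewrite invr_ge0 ltW.
rewrite fB.
have := nrD (f w1) (- f w2); rewrite nrN => hD.
rewrite /s invf_div.
have -> : 4 * n%:R / r * t = 2 * t / r * (2 * n%:R).
  by field; rewrite gt_eqF.
apply: ler_wpM2l; first by apply: divr_ge0; lra.
lra.
Qed.

Lemma two_pow (N : nat) : N.+1%:R <= (2 : R) ^+ N.
Proof.
elim: N => [|N IH]; first by rewrite expr0.
have h1 : 1 <= (2 : R) ^+ N by apply: exprn_ege1; lra.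
rewrite exprS -natr1; lra.
Qed.

Lemma pow_half (N : nat) : ((2 : R)^-1) ^+ N <= N.+1%:R^-1.
Proof.
rewrite exprVn lef_pV2 ?two_pow // posrE ?exprn_gt0 ?ltr0Sn //.
Qed.

Lemma pow_half_gt0 (N : nat) : 0 < ((2 : R)^-1) ^+ N.
Proof. by apply: exprn_gt0; rewrite invr_gt0 ltr0Sn. Qed.

Lemma small_pow (P e : R) : 0 <= P -> 0 < e -> exists N, forall n, (N <= n)%N ->
  P * ((2 : R)^-1) ^+ n < e.
Proof.
move=> P0 e0.
have e1 : 0 < e / (P + 1) by apply: divr_gt0; lra.
have [N HN] := archi_inv e1.
exists N => n Nn.
have h1 : ((2 : R)^-1) ^+ n <= ((2 : R)^-1) ^+ N.
  rewrite -(subnK Nn) exprD ger_pMl ?pow_half_gt0 //.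
  by apply: exprn_ile1; rewrite ?invr_ge0 ?invf_le1 //; lra.
have h2 := pow_half N.
have h3 := pow_half_gt0 n.
move: HN; rewrite ltr_pdivlMr; last lra.
move: (((2 : R)^-1) ^+ n) (((2 : R)^-1) ^+ N) (N.+1%:R^-1) h1 h2 h3 => a b c h1 h2 h3 h4.
have : P * a <= P * c by apply: ler_wpM2l => //; lra.
nra.
Qed.

Lemma bound : exists K : R, forall v, nr (f v) <= K * nr v.
Proof.
have [M [M0 HM]] := approx.
exists (2 * M) => v.
have [v0|vn0] := eqVneq (nr v) 0.
  by rewrite (nr_eq0 v0) f0 !nr0 mulr0.
have t0 : 0 < nr v by rewrite lt0r vn0 nr_ge0.
set t := nr v in t0 vn0 *.
pose q := ((2 : R)^-1).
have step : forall kz : nat * U, exists w, nr (kz.2 - w) < t * q ^+ kz.1.+1 /\ nr (f w) <= M * nr kz.2.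
  by move=> [k z]; apply: HM; apply: mulr_gt0 => //; exact: pow_half_gt0.
have [h Hh] := choice step.
pose fix S n := if n is k.+1 then S k + h (k, v - S k) else 0.
have HS0 : S 0%N = 0 by [].
have HSS : forall k, S k.+1 = S k + h (k, v - S k) by [].
clearbody S.
have Hinv1 : forall n, nr (v - S n) <= t * q ^+ n.
  case => [|k]; first by rewrite HS0 subr0 expr0 mulr1.
  rewrite HSS opprD addrA; have [] := Hh (k, v - S k) => /= h1 _; exact: ltW.
have Hstep : forall k, nr (f (S k.+1) - f (S k)) <= M * t * q ^+ k.
  move=> k; rewrite HSS fD addrAC subrr add0r.
  have [_ /= h2] := Hh (k, v - S k).
  apply: (le_trans h2); rewrite -mulrA; apply: ler_wpM2l => //; exact: Hinv1.
have Hinv2 : forall n m, (n <= m)%N -> nr (f (S m) - f (S n)) <= 2 * (M * t) * q ^+ n - 2 * (M * t) * q ^+ m.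
  move=> n; elim => [|m IH].
    by rewrite leqn0 => /eqP ->; rewrite subrr nr0 subrr.
  rewrite leq_eqVlt => /orP[/eqP ->|]; first by rewrite subrr nr0 subrr.
  rewrite ltnS => /IH nm.
  have e1 : f (S m.+1) - f (S n) = (f (S m.+1) - f (S m)) + (f (S m) - f (S n)).
    by rewrite addrA subrK.
  rewrite e1; have := nrD (f (S m.+1) - f (S m)) (f (S m) - f (S n)).
  have := Hstep m.
  have -> : q ^+ m.+1 = q ^+ m / 2 by rewrite exprS mulrC.
  move: (M * t) (q ^+ m) (q ^+ n) nm => P a b nm h1 h2; lra.
have MT0 : 0 <= 2 * (M * t) by apply: mulr_ge0 => //; apply: mulr_ge0 => //; lra.
have [y Hy] : exists y, forall e : R, 0 < e -> exists N, forall n, (N <= n)%N -> nr (y - f (S n)) < e.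
  apply: complete_seq => e e0.
  have [N HN] := small_pow MT0 e0.
  exists N => n Nn /=.
  have := Hinv2 N n Nn; have := HN N (leqnn N); have := pow_half_gt0 n.
  move: (q ^+ n) (q ^+ N) => a b; move: (2 * (M * t)) MT0 => P P0 h1 h2 h3.
  have : 0 <= P * a by apply: mulr_ge0 => //; lra.
  lra.
have yfv : y = f v.
  apply: fcl => e e0.
  have [N1 HN1] := Hy e e0.
  have [N2 HN2] := small_pow (ltW t0) e0.
  exists (S (maxn N1 N2)); split; last exact: HN1 (leq_maxl _ _).
  apply: le_lt_trans (Hinv1 _) _; exact: HN2 (leq_maxr _ _).
rewrite -yfv; apply/ler_addgt0Pr => e e0.
have [N HN] := Hy e e0.
have h1 := HN N (leqnn N).
have h2 := Hinv2 0%N N (leq0n N).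
rewrite HS0 f0 subr0 expr0 mulr1 in h2.
have h3 : nr y <= nr (y - f (S N)) + nr (f (S N)).
  by have := nrD (y - f (S N)) (f (S N)); rewrite subrK.
have h4 : 0 <= 2 * (M * t) * q ^+ N.
  by apply: mulr_ge0 => //; apply: ltW; apply: pow_half_gt0.
have -> : 2 * M * t = 2 * (M * t) by rewrite mulrA.
lra.
Qed.

Lemma cg_continuous : continuous f.
Proof.
have [K HK] := bound.
move=> x; apply/cvgrPdist_lt => eps eps0.
have e0 : 0 < Re eps by apply: ltC_Re eps0.
move: (Re eps) e0 (realC_ge0 (ltW eps0)) => e e0 ->.
have K1 : 0 < `|K| + 1 by rewrite ltr_pwDr.
apply/nbhs_normP; exists ((e / (`|K| + 1))%:C).
  by rewrite /= ltcR divr_gt0.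
move=> y /=; rewrite normE ltcR => hxy.
rewrite normE ltcR -fB.
have h1 := HK (x - y).
have h2 : K * nr (x - y) <= (`|K| + 1) * nr (x - y).
  apply: ler_wpM2r; first exact: nr_ge0.
  by apply: le_trans (ler_norm K) _; rewrite lerDl.
move: hxy; rewrite ltr_pdivlMr // => hxy.
move: (nr (x - y)) h1 h2 hxy => a h1 h2 hxy.
rewrite mulrC in h2; lra.
Qed.
End CG.

Section Gen.
Variable R : realType.

Lemma approx0 (V : normedModType R[i]) (y : V) (c : R) :
  (forall e : R, 0 < e -> nr y <= c * e) -> y = 0.
Proof.
move=> H; apply: nr_eq0; apply/eqP; rewrite eq_le nr_ge0 andbT.
apply/ler_addgt0Pr => e e0; rewrite add0r.
have c1 : 0 < `|c| + 1 by rewrite ltr_pwDr.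
have e1 : 0 < e / (`|c| + 1) by apply: divr_gt0.
apply: (le_trans (H _ e1)).
apply: (le_trans (ler_wpM2r (ltW e1) (ler_norm c))).
have -> : `|c| * (e / (`|c| + 1)) = e * (`|c| / (`|c| + 1)) by rewrite mulrCA mulrA.
rewrite ger_pMr // ler_pdivrMr //; lra.
Qed.

Lemma nrZc (V : normedModType R[i]) (k : R[i]) (x : V) : nr (k *: x) = Re `|k| * nr x.
Proof.
by rewrite /nr normrZ [`|x|]normE [`|k|](realC_ge0 (normr_ge0 k)) -rmorphM.
Qed.

Lemma bound_conv (V W Z : normedModType R[i]) (C : R[i]) (y : V) (p1 : W) (p2 : Z) (x : V) :
  `|y| <= C * (`|p1| + `|p2|) * `|x| -> nr y <= Re C * (nr p1 + nr p2) * nr x.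
Proof.
rewrite !normE -rmorphD -mulrA -rmorphM => /leC_Re.
by rewrite ReM_real /= mulrA.
Qed.

End Gen.

Lemma add_self0 (V : zmodType) (x : V) : x + x = x -> x = 0.
Proof. by move=> h; have := subrr x; rewrite -{1}h addrK. Qed.

Lemma zh2 (V : zmodType) (a b c d : V) : a - b - (c - d) = a - c - (b - d).
Proof. by rewrite !opprB [LHS]addrACA [RHS]addrACA [- c + _]addrC. Qed.

Unset Implicit Arguments.

Theorem theorem2p9 (R : realType) (A U X : completeNormedModType R[i])
  (mulA : A -> A -> A) (mulU : U -> U -> U) (theta : A -> R[i])
  (la : A * U -> X -> X) (ra : X -> A * U -> X) (D : A * U -> X) :
  banach_algebra mulA -> banach_algebra mulU ->
  nonzero_character mulA theta ->
  banach_bimodule (@padd _ A U) (@pscale _ A U) (lau_mul mulA mulU theta)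
    (@lau_norm _ A U) la ra ->
  simple_bimodule la ra ->
  derivation (@padd _ A U) (@pscale _ A U) (lau_mul mulA mulU theta) la ra D ->
  continuous (fun u : U => D (0, u)) \/
  (forall (a : A) (x : X), la (a, 0) x = ra x (a, 0)).
Proof.
rewrite /banach_algebra /nonzero_character /banach_bimodule /derivation.
move=> [_ [mAD1 mAD2] mAZ1 mAZ2 _] [_ [mUD1 mUD2] mUZ1 mUZ2 _] [thD thZ thM _].
move=> [[laD [laZ [laDp laZp]]] [raD [raZ [raDp raZp]]] [laM [raM lrC]] [C HC]].
move=> Hsimp [DD DZ DM].
have mA0l b : mulA 0 b = 0.
  by apply: add_self0; rewrite -mAD2 addr0.
have mA0r b : mulA b 0 = 0.
  by apply: add_self0; rewrite -mAD1 addr0.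
have mU0l b : mulU 0 b = 0.
  by apply: add_self0; rewrite -mUD2 addr0.
have mU0r b : mulU b 0 = 0.
  by apply: add_self0; rewrite -mUD1 addr0.
have la0 p : la p 0 = 0.
  by apply: add_self0; rewrite -laD addr0.
have ra0 p : ra 0 p = 0.
  by apply: add_self0; rewrite -raD addr0.
have laN p x : la p (- x) = - la p x.
  by apply/eqP; rewrite -addr_eq0 -laD addNr la0.
have raN p x : ra (- x) p = - ra x p.
  by apply/eqP; rewrite -addr_eq0 -raD addNr ra0.
have laB p x y : la p (x - y) = la p x - la p y by rewrite laD laN.
have raB p x y : ra (x - y) p = ra x p - ra y p by rewrite raD raN.
have laS b v x : la (b, v) x = la (b, 0) x + la (0, v) x.
  by rewrite -laDp /padd /= addr0 add0r.
have raS b v x : ra x (b, v) = ra x (b, 0) + ra x (0, v).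
  by rewrite -raDp /padd /= addr0 add0r.
have la0Z (k : R[i]) v x : la (0, k *: v) x = k *: la (0, v) x.
  by rewrite -laZp /pscale /= scaler0.
have ra0Z (k : R[i]) v x : ra x (0, k *: v) = k *: ra x (0, v).
  by rewrite -raZp /pscale /= scaler0.
have la0B v w x : la (0, v - w) x = la (0, v) x - la (0, w) x.
  apply/eqP; rewrite eq_sym subr_eq -laDp /padd /= addr0 subrK //.
have ra0B v w x : ra x (0, v - w) = ra x (0, v) - ra x (0, w).
  apply/eqP; rewrite eq_sym subr_eq -raDp /padd /= addr0 subrK //.
have mulL a b v : lau_mul mulA mulU theta (a, 0) (b, v) = (mulA a b, theta a *: v).
  by rewrite /lau_mul /= mU0l scaler0 !addr0.
have mulR a b v : lau_mul mulA mulU theta (b, v) (a, 0) = (mulA b a, theta a *: v).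
  by rewrite /lau_mul /= mU0r scaler0 add0r addr0.
have HCl p x : nr (la p x) <= Re C * (nr p.1 + nr p.2) * nr x.
  by have [h _] := HC p x; apply: bound_conv; exact: h.
have HCr p x : nr (ra x p) <= Re C * (nr p.1 + nr p.2) * nr x.
  by have [_ h] := HC p x; apply: bound_conv; exact: h.
pose K1 a := `|Re C * nr a| + Re `|theta a|.
have estL a w : nr (la (a, 0) w - theta a *: w) <= K1 a * nr w.
  apply: le_trans (nrD _ _) _; rewrite nrN nrZc.
  have h := HCl (a, 0) w; rewrite /= nr0 addr0 in h.
  have h2 : Re C * nr a * nr w <= `|Re C * nr a| * nr w.
    by apply: ler_wpM2r; [exact: nr_ge0 | exact: ler_norm].
  rewrite /K1 mulrDl; lra.
have estR a w : nr (ra w (a, 0) - theta a *: w) <= K1 a * nr w.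
  apply: le_trans (nrD _ _) _; rewrite nrN nrZc.
  have h := HCr (a, 0) w; rewrite /= nr0 addr0 in h.
  have h2 : Re C * nr a * nr w <= `|Re C * nr a| * nr w.
    by apply: ler_wpM2r; [exact: nr_ge0 | exact: ler_norm].
  rewrite /K1 mulrDl; lra.
pose T := fun x : X => forall a, la (a, 0) x = theta a *: x /\ ra x (a, 0) = theta a *: x.
have Tcl : closed T.
  move=> x Hx a.
  have key : forall (L : X -> X), (forall w, nr (L w) <= K1 a * nr w) ->
      (forall w1 w2, L (w1 - w2) = L w1 - L w2) -> (forall z, T z -> L z = 0) -> L x = 0.
    move=> L HL LB LT; apply: (@approx0 _ _ _ (K1 a)) => e e0.
    have e0' : 0 < e%:C by rewrite ltcR.
    have [z [Tz bz]] := Hx _ (nbhsx_ballx x _ e0').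
    move: bz; rewrite -ball_normE /= normE ltcR => bz.
    have -> : L x = L (x - z) by rewrite LB (LT z Tz) subr0.
    apply: le_trans (HL _) _; apply: ler_wpM2l; last exact: ltW.
    by rewrite /K1; apply: addr_ge0 => //; apply: Re_ge0.
  split; apply/eqP; rewrite -subr_eq0; apply/eqP.
  - apply: (key (fun w => la (a, 0) w - theta a *: w)) => //.
    + by move=> w1 w2; rewrite laB scalerBr zh2.
    + by move=> z /(_ a) [-> _]; rewrite subrr.
  - apply: (key (fun w => ra w (a, 0) - theta a *: w)) => //.
    + by move=> w1 w2; rewrite raB scalerBr zh2.
    + by move=> z /(_ a) [_ ->]; rewrite subrr.
have Tsub : closed_subbimodule la ra T.
  split => //.
  - by move=> a; rewrite la0 ra0 scaler0.
  - move=> x y Tx Ty a; have [h1 h2] := Tx a; have [h3 h4] := Ty a.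
    by rewrite laD raD h1 h2 h3 h4 !scalerDr.
  - move=> k x Tx a; have [h1 h2] := Tx a.
    by rewrite laZ raZ h1 h2 !scalerA mulrC.
  - move=> [b v] x Tx; split => a; split.
    + rewrite -laM mulL (laS (mulA a b) (theta a *: v) x) (laS b v x) la0Z.
      have [h1 _] := Tx (mulA a b); have [h2 _] := Tx b.
      by rewrite h1 h2 thM scalerDr scalerA.
    + by rewrite -lrC (proj2 (Tx a)) laZ.
    + by rewrite lrC (proj1 (Tx a)) raZ.
    + rewrite -raM mulR (raS (mulA b a) (theta a *: v) x) (raS b v x) ra0Z.
      have [_ h1] := Tx (mulA b a); have [_ h2] := Tx b.
      by rewrite h1 h2 thM scalerDr scalerA mulrC.
have [T0|T1] := Hsimp T Tsub; last first.
  right => a x; have : T x by rewrite T1.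
  by move=> /(_ a) [-> ->].
left.
have Dz (k : R[i]) v : D (0, k *: v) = k *: D (0, v).
  by rewrite -DZ /pscale /= scaler0.
apply: cg_continuous.
- by move=> u v; rewrite -DD /padd /= addr0.
- by move=> k u; exact: Dz.
move=> u x Hx.
have key2 : forall (L : X -> X) (M : U -> X) (c1 c2 : R), 0 <= c1 -> 0 <= c2 ->
    (forall w, nr (L w) <= c1 * nr w) -> (forall w, nr (M w) <= c2 * nr w) ->
    (forall w1 w2, L (w1 - w2) = L w1 - L w2) -> (forall w1 w2, M (w1 - w2) = M w1 - M w2) ->
    (forall v, L (D (0, v)) = - M v) -> L (x - D (0, u)) = 0.
  move=> L M c1 c2 c10 c20 HL HM LB MB LM.
  rewrite LB LM opprK; apply: (@approx0 _ _ _ (c1 + c2)) => e e0.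
  have [v [h1 h2]] := Hx e e0.
  have -> : L x + M u = L (x - D (0, v)) + M (u - v).
    by rewrite LB MB LM opprK addrACA subrr addr0.
  apply: le_trans (nrD _ _) _.
  have := HL (x - D (0, v)); have := HM (u - v).
  have : c1 * nr (x - D (0, v)) <= c1 * e by apply: ler_wpM2l => //; exact: ltW.
  have : c2 * nr (u - v) <= c2 * e by apply: ler_wpM2l => //; exact: ltW.
  rewrite mulrDl; lra.
have Tz : T (x - D (0, u)).
  move=> a; split; apply/eqP; rewrite -subr_eq0; apply/eqP.
  - apply: (key2 (fun w => la (a, 0) w - theta a *: w) (fun w => ra (D (a, 0)) (0, w))
       (K1 a) `|Re C * nr (D (a, 0))|).
    + by rewrite /K1; apply: addr_ge0 => //; apply: Re_ge0.
    + by [].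
    + exact: estL.
    + move=> w; have := HCr (0, w) (D (a, 0)); rewrite /= nr0 add0r => h.
      apply: (le_trans h); rewrite mulrAC; apply: ler_wpM2r; [exact: nr_ge0 | exact: ler_norm].
    + by move=> w1 w2; rewrite laB scalerBr zh2.
    + by move=> w1 w2; rewrite ra0B.
    + move=> v; have := DM (a, 0) (0, v); rewrite mulL mA0r Dz => ->.
      by rewrite opprD addrA subrr add0r.
  - apply: (key2 (fun w => ra w (a, 0) - theta a *: w) (fun w => la (0, w) (D (a, 0)))
       (K1 a) `|Re C * nr (D (a, 0))|).
    + by rewrite /K1; apply: addr_ge0 => //; apply: Re_ge0.
    + by [].
    + exact: estR.
    + move=> w; have := HCl (0, w) (D (a, 0)); rewrite /= nr0 add0r => h.
      apply: (le_trans h); rewrite mulrAC; apply: ler_wpM2r; [exact: nr_ge0 | exact: ler_norm].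
    + by move=> w1 w2; rewrite raB scalerBr zh2.
    + by move=> w1 w2; rewrite la0B.
    + move=> v; have := DM (0, v) (a, 0); rewrite mulR mA0l Dz => ->.
      by rewrite opprD addrCA subrr addr0.
by move: Tz; rewrite T0 => /= /eqP; rewrite subr_eq0 => /eqP.
Qed.
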